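(* Let $H:\mathbb{R}\to\mathbb{R}$ be strictly increasing and define $F_H:\mathbb{S}(N)\to\mathbb{R}$ by $F_H(X)=-\sum_{j=1}^N H(\lambda_j(X))$, regarded as a function on $\mathcal{D}=\Omega\times\mathbb{R}\times\mathbb{R}^N\times\mathbb{S}(N)$ depending only on the matrix entry. Then $F_H$ belongs to Class M if and only if $H$ is unbounded above and unbounded below.
   Context: $\mathbb{S}(N)$ is the space of real symmetric $N\times N$ matrices with the Löwner order; $\lambda_1(X)\le\dots\le\lambda_N(X)$ are the eigenvalues of $X$. Class M (for $F:\mathcal{D}\to\mathbb{R}$, $\mathcal{D}\subseteq\Omega\times\mathbb{R}\times\mathbb{R}^N\times\mathbb{S}(N)$): $F$ is continuous in its matrix entry, and for every $\omega$ and sets $\mathcal{S}_1,\mathcal{S}_2\subseteq\mathbb{S}(N)$ with $\{\omega\}\times\mathcal{S}_i\subseteq\mathcal{D}$, there exist $g_i:\mathbb{R}\times\mathcal{S}_i\to\mathbb{R}$ (possibly depending on $\omega$) such that: (1) for each fixed $M_0\in\mathcal{S}_i$, $t\mapsto g_i(t,M_0)$ is an increasing bijection $\mathbb{R}\to\mathbb{R}$, with inverse $s\mapsto g_i(-,M_0)^{-1}(s)$; (2) $M\mapsto g_i(-,M)^{-1}(0)$ is continuous on $\mathcal{S}_i$; (3) for $M\in\mathcal{S}_1$, if $(\omega,X)\in\mathcal{D}$ and $X\le M$ then $-F(\omega,X)\le g_1(\lambda_1(X),M)$; (4) for $M\in\mathcal{S}_2$, if $(\omega,Y)\in\mathcal{D}$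 and $-Y\le M$ then $-F(\omega,Y)\ge g_2(\lambda_N(Y),M)$.
   Formalization: H is assumed continuous as well as strictly increasing, a hypothesis that applies to both directions of the equivalence. The statement above fails without it. *)

(* Defs.v *)
From HB Require Import structures.
From mathcomp Require Import all_boot all_order all_algebra.
From mathcomp Require Import all_classical all_reals all_analysis.
From Stdlib Require Import ClassicalEpsilon.
Set Implicit Arguments. Unset Strict Implicit. Unset Printing Implicit Defensive.
Import Order.TTheory GRing.Theory Num.Theory.
Import numFieldNormedType.Exports.
Local Open Scope classical_set_scope.
Local Open Scope ring_scope.

Section Defs.
Variable R : realType.
Variable N : nat.

Definition symmx : set 'M[R]_N := [set X | X^T = X].

Definition loewner_le (X M : 'M[R]_N) : Prop :=
  forall v : 'cV[R]_N, 0 <= (v^T *m (M - X) *m v) 0 0.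

(* The eigenvalues of X (with multiplicity, in nondecreasing order):
   the sorted list s with char_poly X = prod_(x <- s) ('X - x).
   Such a list exists (and is unique) for every real symmetric matrix;
   for other matrices the value is irrelevant. *)
Definition is_eigseq (X : 'M[R]_N) (s : seq R) : Prop :=
  sorted <=%R s /\ char_poly X = \prod_(x <- s) ('X - x%:P).

Definition eigs (X : 'M[R]_N) : seq R :=
  epsilon (inhabits [::]) (is_eigseq X).

(* lambda_j(X), j = 1..N, stored at index j-1 *)
Definition eig (X : 'M[R]_N) (j : nat) : R := nth 0 (eigs X) j.
Definition lambda_min (X : 'M[R]_N) : R := eig X 0.
Definition lambda_max (X : 'M[R]_N) : R := eig X N.-1.

(* Class M for F defined on D = Omega x R x R^N x S(N)
   (all inequalities are required for every value of the r and p entries). *)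
Definition ClassM (Omega : Type)
    (F : Omega -> R -> 'rV[R]_N -> 'M[R]_N -> R) : Prop :=
  (forall w r p, {within symmx, continuous (F w r p)}) /\
  forall (w : Omega) (S1 S2 : set 'M[R]_N),
    S1 `<=` symmx -> S2 `<=` symmx ->
    exists (g1 g2 : R -> 'M[R]_N -> R) (h1 h2 : 'M[R]_N -> R),
      (forall M0, S1 M0 ->
         (forall s t, s <= t -> g1 s M0 <= g1 t M0) /\ bijective (g1 ^~ M0)
         /\ g1 (h1 M0) M0 = 0) /\
      (forall M0, S2 M0 ->
         (forall s t, s <= t -> g2 s M0 <= g2 t M0) /\ bijective (g2 ^~ M0)
         /\ g2 (h2 M0) M0 = 0) /\
      {within S1, continuous h1} /\ {within S2, continuous h2} /\
      (forall M, S1 M -> forall r p X, symmx X -> loewner_le X M ->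
         - F w r p X <= g1 (lambda_min X) M) /\
      (forall M, S2 M -> forall r p Y, symmx Y -> loewner_le (- Y) M ->
         - F w r p Y >= g2 (lambda_max Y) M).

Definition F_H (Omega : Type) (H : R -> R)
    (w : Omega) (r : R) (p : 'rV[R]_N) (X : 'M[R]_N) : R :=
  - \sum_(j < N) H (eig X j).

End Defs.

(* Main.v *)
Require Import Defs.
From HB Require Import structures.
From mathcomp Require Import all_boot all_order all_algebra.
From mathcomp Require Import all_classical all_reals all_analysis.
From mathcomp Require Import complex spectral sesquilinear lra zify.
From Stdlib Require Import ClassicalEpsilon.
Import Order.TTheory GRing.Theory Num.Theory.
Import numFieldNormedType.Exports.
Set Implicit Arguments. Unset Strict Implicit. Unset Printing Implicit Defensive.
Local Open Scope ring_scope.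

Lemma char_poly_similar (F : fieldType) n (P D : 'M[F]_n) : P \in unitmx ->
  char_poly (invmx P *m D *m P) = char_poly D.
Proof.
move=> Pu; rewrite /char_poly /char_poly_mx.
set mp := map_mx (@polyC F).
have e1 : 'X%:M = mp (invmx P) *m 'X%:M *m mp P.
  rewrite mul_mx_scalar -scalemxAl /mp -map_mxM.
  by rewrite mulVmx // map_mx1 scalemx1.
have e2 : mp (invmx P *m D *m P) = mp (invmx P) *m mp D *m mp P by rewrite /mp !map_mxM.
rewrite e2 {1}e1 -mulmxBl -mulmxBr !det_mulmx mulrC mulrA -det_mulmx.
by rewrite /mp -map_mxM mulmxV // map_mx1 det1 mul1r.
Qed.

Section Weyl.
Variable C : numClosedFieldType.
Variable N : nat.
Local Open Scope sesquilinear_scope.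

Definition qf (A : 'M[C]_N) (v : 'rV[C]_N) : C := (v *m A *m v^t*) 0 0.

Lemma unitary_tV (P : 'M[C]_N) : P \is unitarymx -> P^t* *m P = 1%:M.
Proof. by move=> Pu; rewrite -invmx_unitary // mulVmx // unitarymx_unit. Qed.

Lemma unitary_Vt (P : 'M[C]_N) : P \is unitarymx -> P *m P^t* = 1%:M.
Proof. by move/unitarymxP. Qed.

Lemma ct_mul k l (u : 'M[C]_(k, l)) (P : 'M[C]_(l, N)) : (u *m P)^t* = P^t* *m u^t*.
Proof. by rewrite trmx_mul map_mxM. Qed.

Lemma qf_diag (P : 'M[C]_N) (a : 'rV[C]_N) v : P \is unitarymx ->
  qf (P^t* *m diag_mx a *m P) v =
  \sum_j ((v *m P^t*) 0 j * ((v *m P^t*) 0 j)^*) * a 0 j.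
Proof.
move=> Pu; rewrite /qf.
have -> : v *m (P^t* *m diag_mx a *m P) *m v^t* =
   (v *m P^t*) *m diag_mx a *m (v *m P^t*)^t*.
  by rewrite ct_mul trmxCK !mulmxA.
rewrite mxE; apply: eq_bigr => j _.
by rewrite mul_mx_diag !mxE; rewrite mulrAC.
Qed.

Lemma nrm_unitary (P : 'M[C]_N) (v : 'rV[C]_N) : P \is unitarymx ->
  (v *m v^t*) 0 0 = \sum_j ((v *m P^t*) 0 j * ((v *m P^t*) 0 j)^*).
Proof.
move=> Pu.
have -> : v *m v^t* = (v *m P^t*) *m (v *m P^t*)^t*.
  by rewrite ct_mul trmxCK mulmxA -(mulmxA v) unitary_tV // mulmx1.
by rewrite mxE; apply: eq_bigr => j _; rewrite !mxE.
Qed.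

Lemma rowsub_unitary m (f : 'I_m -> 'I_N) (P : 'M[C]_N) : P \is unitarymx ->
  rowsub f P *m P^t* = rowsub f 1%:M.
Proof.
move=> Pu; apply/matrixP => i j.
have := congr1 (fun M : 'M[C]_N => M (f i) j) (unitary_Vt Pu).
by rewrite !mxE => <-; apply: eq_bigr => k _; rewrite !mxE.
Qed.

Lemma rank_rowsub_unitary m (f : 'I_m -> 'I_N) (P : 'M[C]_N) :
  injective f -> P \is unitarymx -> \rank (rowsub f P) = m.
Proof.
move=> fi Pu; apply/eqP; rewrite eqn_leq rank_leq_row /=.
have e : rowsub f P *m (rowsub f P)^t* = 1%:M.
  apply/matrixP => i j.
  have := congr1 (fun M : 'M[C]_N => M (f i) (f j)) (unitary_Vt Pu).
  rewrite !mxE (inj_eq fi) => <-; apply: eq_bigr => k _; by rewrite !mxE.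
by rewrite -{1}(mxrank1 C m) -e mxrankM_maxl.
Qed.

Lemma supp_rowsub m (f : 'I_m -> 'I_N) (P : 'M[C]_N) (v : 'rV[C]_N) j :
  P \is unitarymx -> (v <= rowsub f P)%MS -> (forall i, f i != j) ->
  (v *m P^t*) 0 j = 0.
Proof.
move=> Pu /submxP [D ->] fj.
rewrite -mulmxA rowsub_unitary // mxE big1 // => i _.
by rewrite !mxE (negbTE (fj i)) mulr0.
Qed.


Lemma nrm_gt0 (v : 'rV[C]_N) : v != 0 -> 0 < (v *m v^t*) 0 0.
Proof.
move=> u_neq0; rewrite mxE.
suff /existsP[i ui_neq0] : [exists i, v 0 i != 0].
  rewrite (bigD1 i) //= ltr_wpDr// ?sumr_ge0// ?mxE ?mul_conjC_gt0//.
  by move=> j _; rewrite !mxE mul_conjC_ge0.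
apply: contraNT u_neq0; rewrite negb_exists => /forallP uNN0.
by apply/eqP/rowP=> j; rewrite mxE; apply/eqP; rewrite -[_ == _]negbK uNN0.
Qed.

Lemma qf_lower (P : 'M[C]_N) (a : 'rV[C]_N) (al : C) m (f : 'I_m -> 'I_N) v :
  P \is unitarymx -> (v <= rowsub f P)%MS ->
  (forall j, (forall i, f i != j) \/ al <= a 0 j) ->
  al * (v *m v^t*) 0 0 <= qf (P^t* *m diag_mx a *m P) v.
Proof.
move=> Pu vs hj; rewrite qf_diag // (nrm_unitary v Pu) mulr_sumr.
apply: ler_sum => j _; case: (hj j) => [fj|alj].
  by rewrite (supp_rowsub Pu vs fj) !mul0r mulr0.
by rewrite [X in X <= _]mulrC; apply: ler_wpM2l => //; exact: mul_conjC_ge0.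
Qed.

Lemma qf_upper (P : 'M[C]_N) (a : 'rV[C]_N) (be : C) m (f : 'I_m -> 'I_N) v :
  P \is unitarymx -> (v <= rowsub f P)%MS ->
  (forall j, (forall i, f i != j) \/ a 0 j <= be) ->
  qf (P^t* *m diag_mx a *m P) v <= be * (v *m v^t*) 0 0.
Proof.
move=> Pu vs hj; rewrite qf_diag // (nrm_unitary v Pu) mulr_sumr.
apply: ler_sum => j _; case: (hj j) => [fj|alj].
  by rewrite (supp_rowsub Pu vs fj) !mul0r mulr0.
by rewrite [X in _ <= X]mulrC; apply: ler_wpM2l => //; exact: mul_conjC_ge0.
Qed.

Lemma qf_real (P : 'M[C]_N) (a : 'rV[C]_N) v : P \is unitarymx ->
  (forall i, a 0 i \is Num.real) -> qf (P^t* *m diag_mx a *m P) v \is Num.real.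
Proof.
move=> Pu ar; rewrite qf_diag //; apply: rpred_sum => j _.
by rewrite realM // ger0_real // mul_conjC_ge0.
Qed.

Lemma qfB (A B : 'M[C]_N) v : qf (A - B) v = qf A v - qf B v.
Proof. rewrite /qf mulmxBr mulmxBl [LHS]mxE [X in _ + X]mxE. done. Qed.

Lemma weyl_core (P Q : 'M[C]_N) (a b : 'rV[C]_N) (al be de : C) :
  P \is unitarymx -> Q \is unitarymx ->
  (forall i, a 0 i \is Num.real) -> (forall i, b 0 i \is Num.real) ->
  (forall v, `|qf (P^t* *m diag_mx a *m P - Q^t* *m diag_mx b *m Q) v|
      <= de * (v *m v^t*) 0 0) ->
  (N < #|[set i | (al <= a 0 i)%R]| + #|[set j | (b 0 j <= be)%R]|)%N ->
  al <= be + de.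
Proof.
move=> Pu Qu ar br hD hcard.
set I := [set i | (al <= a 0 i)%R]; set J := [set j | (b 0 j <= be)%R].
pose U1 := rowsub (@enum_val _ (mem I)) P.
pose U2 := rowsub (@enum_val _ (mem J)) Q.
have r1 : \rank U1 = #|I| by apply: rank_rowsub_unitary => //; exact: enum_val_inj.
have r2 : \rank U2 = #|J| by apply: rank_rowsub_unitary => //; exact: enum_val_inj.
have hsc := mxrank_sum_cap U1 U2.
have hle := rank_leq_col (U1 + U2)%MS.
have : (U1 :&: U2)%MS != 0.
  rewrite -mxrank_eq0; apply/eqP => h0.
  move: hsc hle hcard; rewrite h0 r1 r2 addn0 => ->; rewrite leqNgt => /negP; done.
case/rowV0Pn => v vcap vn0.
have v1 : (v <= U1)%MS by apply: submx_trans vcap (capmxSl _ _).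
have v2 : (v <= U2)%MS by apply: submx_trans vcap (capmxSr _ _).
have hA := qf_lower (al := al) (a := a) Pu v1.
have hB := qf_upper (be := be) (a := b) Qu v2.
have {}hA : al * (v *m v^t*) 0 0 <= qf (P^t* *m diag_mx a *m P) v.
  apply: hA => j; case: (boolP (j \in I)) => jI; last first.
    by left => i; apply: contraNneq jI => <-; exact: enum_valP.
  by right; move: jI; rewrite inE.
have {}hB : qf (Q^t* *m diag_mx b *m Q) v <= be * (v *m v^t*) 0 0.
  apply: hB => j; case: (boolP (j \in J)) => jJ; last first.
    by left => i; apply: contraNneq jJ => <-; exact: enum_valP.
  by right; move: jJ; rewrite inE.
have hv := hD v; rewrite qfB in hv.
have rD : qf (P^t* *m diag_mx a *m P) v - qf (Q^t* *m diag_mx b *m Q) v \is Num.real.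
  by rewrite rpredB // qf_real.
have := real_ler_norm rD => hn.
have npos := nrm_gt0 vn0.
rewrite -(ler_pM2r npos) mulrDl.
apply: (le_trans hA).
rewrite -[qf _ v](subrK (qf (Q^t* *m diag_mx b *m Q) v)) addrC.
apply: lerD => //; exact: le_trans hn hv.
Qed.

End Weyl.

Section Real.
Variable R : realType.
Variable N : nat.
Local Open Scope sesquilinear_scope.
Local Notation C := (R[i])%C.
Local Notation toC := (real_complex R).

Lemma toC_real (x : R) : toC x \is Num.real.
Proof. by apply/complex_realP; exists x. Qed.

Lemma spectral_real (X : 'M[R]_N) : X^T = X ->
  exists (P : 'M[C]_N) (a : 'I_N -> R), P \is unitarymx /\
    map_mx toC X = P^t* *m diag_mx (\row_i toC (a i)) *m P.
Proof.
move=> Xs.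
have hX : map_mx toC X \is hermsymmx.
  apply: realsym_hermsym.
    apply/is_hermitianmxP; rewrite expr0 scale1r; apply/matrixP => i j; rewrite !mxE /=; by rewrite -{1}Xs mxE.
  by apply/mxOverP => i j; rewrite mxE toC_real.
have := hermitian_spectral_diag_real hX.
have /orthomx_spectralP := hermitian_normalmx hX.
rewrite invmx_unitary ?spectral_unitarymx // => eX /mxOverP dr.
exists (spectralmx (map_mx toC X)).
exists (fun i => complex.Re (spectral_diag (map_mx toC X) 0 i)).
split; first exact: spectral_unitarymx.
rewrite {1}eX; congr (_ *m diag_mx _ *m _); apply/rowP => i; rewrite mxE.
by have /complex_realP [k ->] := dr 0 i.
Qed.

Lemma char_poly_spec (X : 'M[R]_N) (P : 'M[C]_N) (a : 'I_N -> R) :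
  P \is unitarymx -> map_mx toC X = P^t* *m diag_mx (\row_i toC (a i)) *m P ->
  char_poly X = \prod_(i < N) ('X - (a i)%:P).
Proof.
move=> Pu eX.
apply: (@map_poly_inj _ _ toC).
rewrite map_char_poly eX -invmx_unitary // char_poly_similar ?unitarymx_unit //.
rewrite char_poly_trig ?diag_mx_is_trig // map_prod_XsubC.
by apply: eq_bigr => i _; rewrite !mxE eqxx mulr1n.
Qed.

Lemma char_poly_real (X : 'M[R]_N) : X^T = X ->
  exists a : 'I_N -> R, char_poly X = \prod_(i < N) ('X - (a i)%:P).
Proof.
move=> /spectral_real [P [a [Pu eX]]]; exists a; exact: char_poly_spec eX.
Qed.

End Real.

Section RealEig.
Variable R : realType.
Variable N : nat.

Lemma prod_enum (a : 'I_N -> R) :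
  \prod_(x <- [seq a i | i <- enum 'I_N]) ('X - x%:P) = \prod_(i < N) ('X - (a i)%:P).
Proof. by rewrite big_map big_enum. Qed.

Lemma eigs_spec (X : 'M[R]_N) : X^T = X -> is_eigseq X (eigs X).
Proof.
move=> Xs; have [a ha] := char_poly_real Xs.
rewrite /eigs; apply: epsilon_spec.
exists (sort <=%R [seq a i | i <- enum 'I_N]); split.
  by apply: sort_sorted; exact: le_total.
by rewrite ha (perm_big _ (permEl (perm_sort _ _))) /= prod_enum.
Qed.

Lemma eigs_perm (X : 'M[R]_N) (a : 'I_N -> R) : X^T = X ->
  char_poly X = \prod_(i < N) ('X - (a i)%:P) ->
  perm_eq (eigs X) [seq a i | i <- enum 'I_N].
Proof.
move=> Xs ha; apply: prod_XsubC_eq.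
have [_ e] := eigs_spec Xs; by rewrite -e ha prod_enum.
Qed.

Lemma eigs_size (X : 'M[R]_N) : X^T = X -> size (eigs X) = N.
Proof.
move=> Xs; have [a ha] := char_poly_real Xs.
by rewrite (perm_size (eigs_perm Xs ha)) size_map size_enum_ord.
Qed.

Lemma eigs_root (X : 'M[R]_N) x : X^T = X -> x \in eigs X -> root (char_poly X) x.
Proof.
move=> Xs xin; have [_ e] := eigs_spec Xs.
by rewrite e root_prod_XsubC.
Qed.

Lemma card_count (a : 'I_N -> R) (p : pred R) :
  #|[set i | p (a i)]| = count p [seq a i | i <- enum 'I_N].
Proof.
rewrite cardsE cardE /enum_mem size_filter count_map.
by rewrite (@eq_filter _ _ predT) ?filter_predT.
Qed.

Lemma count_ge (s : seq R) k : sorted <=%R s -> (k < size s)%N ->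
  (size s - k <= count (fun x => (nth 0 s k <= x)%R) s)%N.
Proof.
move=> ss ks.
rewrite -[s in count _ s](cat_take_drop k) count_cat.
have : all (fun x => (nth 0 s k <= x)%R) (drop k s).
  apply/(all_nthP 0) => i; rewrite size_drop => hi.
  rewrite nth_drop; apply: (sorted_leq_nth le_trans le_refl) => //.
  by rewrite inE -ltn_subRL.
  by rewrite leq_addr.
rewrite all_count => /eqP ->; rewrite size_drop; exact: leq_addl.
Qed.

Lemma count_le (s : seq R) k : sorted <=%R s -> (k < size s)%N ->
  (k.+1 <= count (fun x => (x <= nth 0 s k)%R) s)%N.
Proof.
move=> ss ks.
rewrite -[s in count _ s](cat_take_drop k.+1) count_cat.
have : all (fun x => (x <= nth 0 s k)%R) (take k.+1 s).
  apply/(all_nthP 0) => i; rewrite size_takel // => hi.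
  rewrite nth_take //; apply: (sorted_leq_nth le_trans le_refl) => //.
    by rewrite inE; exact: leq_ltn_trans ks.
rewrite all_count => /eqP ->; rewrite size_takel //; exact: leq_addr.
Qed.

End RealEig.

Section Bound.
Variable C : numClosedFieldType.
Variable N : nat.
Local Open Scope sesquilinear_scope.

Lemma mul_le_sq (x y : C) : 0 <= x -> 0 <= y -> x * y <= x ^+ 2 + y ^+ 2.
Proof.
move=> x0 y0.
have := real_leVge (ger0_real x0) (ger0_real y0); case/orP => h.
  apply: le_trans (_ : y * y <= _); first exact: ler_wpM2r.
  by rewrite -expr2 lerDr exprn_ge0.
apply: le_trans (_ : x * x <= _); first exact: ler_wpM2l.
by rewrite -expr2 lerDl exprn_ge0.
Qed.

Lemma qf_bound (D : 'M[C]_N) (v : 'rV[C]_N) :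
  `|qf D v| <= (2 * \sum_i \sum_j `|D i j|) * (v *m v^t*) 0 0.
Proof.
set nv := (v *m v^t*) 0 0.
have nvE : nv = \sum_l `|v 0 l| ^+ 2.
  by rewrite /nv mxE; apply: eq_bigr => l _; rewrite !mxE normCK.
have hv : forall i, `|v 0 i| ^+ 2 <= nv.
  move=> i; rewrite nvE (bigD1 i) //= lerDl sumr_ge0 // => l _.
have hij : forall i j, `|v 0 i| * `|v 0 j| <= 2 * nv.
  move=> i j; apply: le_trans (mul_le_sq (normr_ge0 _) (normr_ge0 _)) _.
  by rewrite mulr2n mulrDl mul1r lerD.
rewrite /qf mxE.
apply: le_trans (ler_norm_sum _ _ _) _.
have -> : (2 * \sum_i \sum_j `|D i j|) * nv =
    \sum_i \sum_j (`|D i j| * (2 * nv)).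
  rewrite mulrAC mulr_sumr; apply: eq_bigr => i _.
  rewrite mulr_sumr; apply: eq_bigr => j _; exact: mulrC.
rewrite exchange_big /=.
apply: ler_sum => j _; rewrite mxE normrM !mxE norm_conjC.
apply: le_trans (ler_wpM2r (normr_ge0 _) (ler_norm_sum _ _ _)) _.
rewrite mulr_suml; apply: ler_sum => i _; rewrite normrM.
rewrite mulrAC [X in _ <= X]mulrC; exact: (ler_wpM2r (normr_ge0 _) (hij i j)).
Qed.

End Bound.

Section WeylReal.
Variable R : realType.
Variable N : nat.
Local Open Scope sesquilinear_scope.
Local Notation toC := (real_complex R).

Lemma normC_toC (x : R) : `|toC x| = toC `|x|.
Proof. by rewrite normc_def /= expr0n addr0 sqrtr_sqr. Qed.

Lemma weyl_real (X Y : 'M[R]_N) k : X^T = X -> Y^T = Y -> (k < N)%N ->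
  eig X k <= eig Y k + 2 * \sum_i \sum_j `|X i j - Y i j|.
Proof.
move=> Xs Ys kN.
have [P [a [Pu eX]]] := spectral_real Xs.
have [Q [b [Qu eY]]] := spectral_real Ys.
have pX := eigs_perm Xs (char_poly_spec Pu eX).
have pY := eigs_perm Ys (char_poly_spec Qu eY).
have [sX _] := eigs_spec Xs; have [sY _] := eigs_spec Ys.
have zX := eigs_size Xs; have zY := eigs_size Ys.
rewrite -lecR rmorphD /=.
apply: (@weyl_core _ _ P Q (\row_i toC (a i)) (\row_i toC (b i))) => //.
- by move=> i; rewrite mxE toC_real.
- by move=> i; rewrite mxE toC_real.
- move=> v; rewrite -eX -eY -map_mxB; apply: le_trans (qf_bound _ _) _.
  apply: ler_wpM2r; first by rewrite mxE sumr_ge0 // => l _; rewrite !mxE mul_conjC_ge0.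
  rewrite rmorphM rmorph_sum /= rmorph_nat; apply: ler_wpM2l => //.
  apply: ler_sum => i _; rewrite rmorph_sum; apply: ler_sum => j _.
  by rewrite !mxE normC_toC.
have -> : [set i | (toC (eig X k) <= (\row_i toC (a i)) 0 i)%R] =
          [set i | (eig X k <= a i)%R].
  by apply/setP => i; rewrite !inE mxE lecR.
have -> : [set j | ((\row_i toC (b i)) 0 j <= toC (eig Y k))%R] =
          [set j | (b j <= eig Y k)%R].
  by apply/setP => i; rewrite !inE mxE lecR.
rewrite (card_count a (fun x => (eig X k <= x)%R)) (card_count b (fun x => (x <= eig Y k)%R)) -(permP pX) -(permP pY).
have h1 := count_ge sX (k := k); rewrite zX in h1.
have h2 := count_le sY (k := k); rewrite zY in h2.
have := h1 kN; have := h2 kN; rewrite /eig.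
move: (count _ (eigs X)) (count _ (eigs Y)) => c1 c2; lia.
Qed.

End WeylReal.

Section Loew.
Variable R : realType.
Variable N : nat.

Lemma rmul_le_sq (x y : R) : 0 <= x -> 0 <= y -> x * y <= x ^+ 2 + y ^+ 2.
Proof. move=> x0 y0; nra. Qed.

Definition Kb (M : 'M[R]_N) : R := 2 * \sum_i \sum_j `|M i j|.

Lemma rqf_bound (D : 'M[R]_N) (v : 'rV[R]_N) :
  `|(v *m D *m v^T) 0 0| <= Kb D * (v *m v^T) 0 0.
Proof.
rewrite /Kb.
set nv := (v *m v^T) 0 0.
have nvE : nv = \sum_l `|v 0 l| ^+ 2.
  by rewrite /nv mxE; apply: eq_bigr => l _; rewrite !mxE real_normK ?num_real // expr2.
have hv : forall i, `|v 0 i| ^+ 2 <= nv.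
  by move=> i; rewrite nvE (bigD1 i) //= lerDl sumr_ge0.
have hij : forall i j, `|v 0 i| * `|v 0 j| <= 2 * nv.
  move=> i j; apply: le_trans (rmul_le_sq (normr_ge0 _) (normr_ge0 _)) _.
  by rewrite mulr2n mulrDl mul1r lerD.
rewrite mxE.
apply: le_trans (ler_norm_sum _ _ _) _.
have -> : (2 * \sum_i \sum_j `|D i j|) * nv =
    \sum_i \sum_j (`|D i j| * (2 * nv)).
  rewrite mulrAC mulr_sumr; apply: eq_bigr => i _.
  rewrite mulr_sumr; apply: eq_bigr => j _; exact: mulrC.
rewrite exchange_big /=.
apply: ler_sum => j _; rewrite mxE normrM !mxE.
apply: le_trans (ler_wpM2r (normr_ge0 _) (ler_norm_sum _ _ _)) _.
rewrite mulr_suml; apply: ler_sum => i _; rewrite normrM.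
rewrite mulrAC [X in _ <= X]mulrC; exact: (ler_wpM2r (normr_ge0 _) (hij i j)).
Qed.

Lemma rnrm_gt0 (v : 'rV[R]_N) : v != 0 -> 0 < (v *m v^T) 0 0.
Proof.
move=> u_neq0; rewrite mxE.
suff /existsP[i ui_neq0] : [exists i, v 0 i != 0].
  rewrite (bigD1 i) //= ltr_wpDr// ?sumr_ge0// ?mxE.
    by move=> j _; rewrite !mxE -expr2 sqr_ge0.
  by rewrite lt_def mulf_neq0 //= -expr2 sqr_ge0.
apply: contraNT u_neq0; rewrite negb_exists => /forallP uNN0.
by apply/eqP/rowP=> j; rewrite mxE; apply/eqP; rewrite -[_ == _]negbK uNN0.
Qed.

Lemma eig_vec (X : 'M[R]_N) x : X^T = X -> x \in eigs X ->
  exists2 v : 'rV[R]_N, v *m X = x *: v & v != 0.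
Proof.
move=> Xs xin; apply/eigenvalueP; rewrite eigenvalue_root_char.
exact: eigs_root.
Qed.

Lemma quad_eig (X : 'M[R]_N) (v : 'rV[R]_N) x : v *m X = x *: v ->
  (v *m X *m v^T) 0 0 = x * (v *m v^T) 0 0.
Proof. by move=> ->; rewrite -scalemxAl mxE. Qed.

Lemma eig_upper (X M : 'M[R]_N) x : X^T = X -> loewner_le X M -> x \in eigs X ->
  x <= Kb M.
Proof.
move=> Xs hl xin; have [v hv vn0] := eig_vec Xs xin.
have := hl v^T; rewrite trmxK mulmxBr mulmxBl mxE [X in _ + X]mxE.
rewrite (quad_eig hv) subr_ge0 => h.
have npos := rnrm_gt0 vn0.
rewrite -(ler_pM2r npos); apply: (le_trans h).
exact: le_trans (ler_norm _) (rqf_bound _ _).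
Qed.

Lemma eig_lower (Y M : 'M[R]_N) y : Y^T = Y -> loewner_le (- Y) M -> y \in eigs Y ->
  - Kb M <= y.
Proof.
move=> Ys hl yin; have [v hv vn0] := eig_vec Ys yin.
have := hl v^T; rewrite trmxK opprK mulmxDr mulmxDl mxE.
rewrite (quad_eig hv) => h.
have npos := rnrm_gt0 vn0.
rewrite -(ler_pM2r npos) mulNr.
have h2 : - (v *m M *m v^T) 0 0 <= y * (v *m v^T) 0 0 by rewrite -subr_ge0 opprK addrC.
apply: le_trans _ h2; rewrite lerN2.
exact: le_trans (ler_norm _) (rqf_bound _ _).
Qed.

End Loew.

Local Open Scope classical_set_scope.
Section Cont.
Variable R : realType.
Variable N : nat.

Lemma entry_le_norm (M : 'M[R]_N) i j : `|M i j| <= `|M|.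
Proof.
rewrite [leRHS]/Num.norm /= mx_normrE; apply/bigmax_geP; right => /=.
by exists (i, j).
Qed.

Lemma sum_le_norm (M : 'M[R]_N) : \sum_i \sum_j `|M i j| <= (N * N)%:R * `|M|.
Proof.
apply: le_trans (_ : \sum_(i < N) \sum_(j < N) `|M| <= _).
  by apply: ler_sum => i _; apply: ler_sum => j _; exact: entry_le_norm.
rewrite !sumr_const !card_ord -mulr_natl -mulrnA mulr_natl.
by rewrite mulr_natl.
Qed.

Lemma eig_dist (X Y : 'M[R]_N) j : X^T = X -> Y^T = Y -> (j < N)%N ->
  `|eig X j - eig Y j| <= 2 * ((N * N)%:R * `|X - Y|).
Proof.
move=> Xs Ys jN.
have h1 := weyl_real Xs Ys jN.
have h2 := weyl_real Ys Xs jN.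
have e : \sum_i \sum_j `|Y i j - X i j| = \sum_i \sum_j `|X i j - Y i j|.
  by apply: eq_bigr => i _; apply: eq_bigr => k _; rewrite distrC.
have h3 : \sum_i \sum_j `|X i j - Y i j| <= (N * N)%:R * `|X - Y|.
  apply: le_trans (sum_le_norm (X - Y)); apply: ler_sum => i _; apply: ler_sum => k _.
  by rewrite !mxE.
rewrite e in h2.
rewrite ler_norml; apply/andP; split; lra.
Qed.

Lemma eig_cvg (X : 'M[R]_N) j : X^T = X -> (j < N)%N ->
  (fun Y => eig Y j) @ within (@symmx R N) (nbhs X) --> eig X j.
Proof.
move=> Xs jN; apply/cvgrPdist_lt => e e0.
pose K : R := 2 * (N * N)%:R + 1.
have K0 : 0 < K by rewrite /K ltr_wpDl // mulr_ge0.
have := @cvgr_dist_lt _ _ _ (nbhs X) (nbhs_filter X) id X (fun P h => h) _ (divr_gt0 e0 K0).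
move=> hn; rewrite near_withinE; apply: (filterS _ hn) => Y hY Ys.
have Ys' : Y^T = Y := Ys.
apply: le_lt_trans (eig_dist Xs Ys' jN) _.
have hn0 : 0 <= `|X - Y| by [].
have : K * `|X - Y| < e.
  by rewrite -ltr_pdivlMl // mulrC.
rewrite /K; have : 0 <= (N * N)%:R :> R by [].
move: hY; move: (`|X - Y|) ((N * N)%:R : R) => a b hY b0 h; nra.
Qed.

Lemma cvg_bigsum T (F : set_system T) (FF : Filter F) (I : Type) (r : seq I)
  (f : I -> T -> R) (l : I -> R) : (forall i, f i @ F --> l i) ->
  (fun t => \sum_(i <- r) f i t) @ F --> \sum_(i <- r) l i.
Proof.
move=> h; elim: r => [|i r ih].
  under eq_fun do rewrite big_nil. rewrite big_nil; exact: cvg_cst.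
under eq_fun do rewrite big_cons. rewrite big_cons. exact: cvgD.
Qed.

Lemma FH_cont (Omega : Type) (H : R -> R) (Hc : continuous H) w r p :
  {within (@symmx R N), continuous (@F_H R N Omega H w r p)}.
Proof.
apply/subspace_continuousP => X Xs.
have Xs' : X^T = X := Xs.
rewrite /F_H; apply: cvgN.
have := @cvg_bigsum _ (within (@symmx R N) (nbhs X)) _ _ (index_enum 'I_N) (fun j Y => H (eig Y j)) (fun j => H (eig X j)). apply => j.
exact: continuous_cvg (Hc _) (eig_cvg Xs' (ltn_ord j)).
Qed.

End Cont.

Local Open Scope classical_set_scope.
Section Main1.
Variable R : realType.
Variable N : nat.

Lemma eig_scalar (t : R) j : (j < N)%N -> eig (t%:M : 'M[R]_N) j = t.
Proof.
move=> jN.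
have s : (t%:M : 'M[R]_N)^T = t%:M by rewrite tr_scalar_mx.
have hin : eig (t%:M : 'M[R]_N) j \in eigs (t%:M : 'M[R]_N).
  by apply: mem_nth; rewrite eigs_size.
have := eigs_root s hin.
rewrite char_poly_trig ?scalar_mx_is_trig // /root horner_prod prodf_seq_eq0.
case/hasP => i _ /=; rewrite !mxE eqxx mulr1n !hornerE subr_eq0 => /eqP.
by rewrite /eig.
Qed.

Lemma vTv_ge0 (v : 'cV[R]_N) : 0 <= (v^T *m v) 0 0.
Proof. by rewrite mxE sumr_ge0 // => i _; rewrite !mxE -expr2 sqr_ge0. Qed.

Lemma loewner_scalar_le0 (t : R) : t <= 0 -> loewner_le (t%:M : 'M[R]_N) 0.
Proof.
move=> t0 v; rewrite sub0r mulmxN mulNmx mul_mx_scalar -scalemxAl mxE mxE.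
by rewrite -mulNr mulr_ge0 // ?oppr_ge0 // vTv_ge0.
Qed.

Lemma loewner_scalar_ge0 (t : R) : 0 <= t -> loewner_le (- (t%:M : 'M[R]_N)) 0.
Proof.
move=> t0 v; rewrite sub0r opprK mul_mx_scalar -scalemxAl mxE.
by rewrite mulr_ge0 // vTv_ge0.
Qed.

Lemma Kb_lip (X Y : 'M[R]_N) : `|Kb X - Kb Y| <= 2 * ((N * N)%:R * `|X - Y|).
Proof.
rewrite /Kb -mulrBr normrM ger0_norm // ler_wpM2l //.
rewrite -sumrB; apply: le_trans (ler_norm_sum _ _ _) _.
apply: le_trans (sum_le_norm (X - Y)).
apply: ler_sum => i _.
rewrite -sumrB; apply: le_trans (ler_norm_sum _ _ _) _.
apply: ler_sum => j _; rewrite !mxE; exact: ler_dist_dist.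
Qed.

Lemma Kb_cont : continuous (@Kb R N).
Proof.
move=> X; apply/(@cvgrPdist_lt _ _ _ _ (nbhs_filter X)) => e e0.
pose K : R := 2 * (N * N)%:R + 1.
have K0 : 0 < K by rewrite /K ltr_wpDl // mulr_ge0.
have := @cvgr_dist_lt _ _ _ (nbhs X) (nbhs_filter X) id X (fun P h => h) _ (divr_gt0 e0 K0).
move=> hn; apply: (@filterS _ _ (nbhs_filter X) _ _ _ hn) => Y hY.
apply: le_lt_trans (Kb_lip X Y) _.
have hn0 : 0 <= `|X - Y| by [].
have : K * `|X - Y| < e.
  by rewrite -ltr_pdivlMl // mulrC.
rewrite /K; have : 0 <= (N * N)%:R :> R by [].
move: hY; move: (`|X - Y|) ((N * N)%:R : R) => a b hY b0 h; nra.
Qed.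

End Main1.

Section HLem.
Variable R : realType.
Variable H : R -> R.
Hypothesis H_incr : forall s t : R, s < t -> H s < H t.
Hypothesis Hc : continuous H.

Lemma H_mono s t : s <= t -> H s <= H t.
Proof. by rewrite le_eqVlt => /orP [/eqP -> //| /H_incr /ltW]. Qed.

Lemma H_inj s t : H s = H t -> s = t.
Proof.
move=> e; case: (ltgtP s t) => // h; have := H_incr h; by rewrite e ltxx.
Qed.

Lemma H_surj (hu : forall m, exists t, m < H t) (hl : forall m, exists t, H t < m) y :
  exists t, H t = y.
Proof.
have [b hb] := hu y; have [a ha] := hl y.
have ab : a <= b.
  case: (leP a b) => // ba; have := H_incr ba; move: ha hb; lra.
have hab := H_mono ab.
have hcw : {within `[a, b], continuous H} by apply: continuous_subspaceT.
have hy : Num.min (H a) (H b) <= y <= Num.max (H a) (H b).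
  by rewrite (min_idPl hab) (max_idPr hab) (ltW ha) (ltW hb).
have [c _ hc] := @IVT R H a b y ab hcw hy.
by exists c.
Qed.

Lemma Hinv_cont (Hinv : R -> R) : (forall y, H (Hinv y) = y) -> continuous Hinv.
Proof.
move=> HK y.
have KH : forall t, Hinv (H t) = t by move=> t; apply: H_inj; rewrite HK.
have c1 : {near Hinv y, cancel H Hinv} by apply: (@nearW _ _ _ (nbhs_filter (Hinv y))) => z; exact: KH.
have c2 : {near Hinv y, continuous H} by apply: (@nearW _ _ _ (nbhs_filter (Hinv y))) => z; exact: Hc.
have := nbhs_singleton (near_can_continuous c1 c2).
by rewrite HK.
Qed.

End HLem.


Local Open Scope classical_set_scope.

Theorem proposition2 (R : realType) (n : nat) (Omega : Type) (w0 : Omega)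
    (H : R -> R)
    (H_incr : forall s t : R, s < t -> H s < H t)
    (H_cont : continuous H) :
  ClassM (@F_H R n.+1 Omega H) <->
  ((forall m : R, exists t : R, m < H t) /\ (forall m : R, exists t : R, H t < m)).
Proof.
have sumS : forall t : R, \sum_(j < n.+1) H (eig (t%:M : 'M[R]_n.+1) j) = n.+1%:R * H t.
  move=> t; rewrite (eq_bigr (fun=> H t)); last by move=> j _; rewrite eig_scalar.
  by rewrite sumr_const card_ord mulr_natl.
have symS : forall t : R, (t%:M : 'M[R]_n.+1)^T = t%:M by move=> t; rewrite tr_scalar_mx.
split.
- case=> _ hM.
  have s0 : [set (0 : 'M[R]_n.+1)] `<=` @symmx R n.+1.
    by move=> X ->; rewrite /symmx /= trmx0.
  have [g1 [g2 [h1 [h2 [c1 [c2 [_ [_ [c3 c4]]]]]]]]] := hM w0 _ _ s0 s0.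
  have [m1 [[ginv1 K11 K12] _]] := c1 0 (erefl _).
  have [m2 [[ginv2 K21 K22] _]] := c2 0 (erefl _).
  split.
  + move=> m; case: (pselect (exists t, m < H t)) => // hn; exfalso.
    have hb : forall t, H t <= m.
      by move=> t; rewrite leNgt; apply/negP => ht; apply: hn; exists t.
    pose s := ginv2 (n.+1%:R * m + 1).
    pose t := Num.max s 0.
    have t0 : 0 <= t by rewrite le_max lexx orbT.
    have st : s <= t by rewrite le_max lexx.
    have := c4 0 (erefl _) 0 0 (t%:M) (symS t) (loewner_scalar_ge0 t0).
    rewrite /F_H opprK sumS /lambda_max eig_scalar //=.
    have := m2 _ _ st; rewrite /s K22 => h1' h2'.
    have := hb t; have : (0 : R) < n.+1%:R by [].
    move: (n.+1%:R : R) h1' h2' => k; nra.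
  + move=> m; case: (pselect (exists t, H t < m)) => // hn; exfalso.
    have hb : forall t, m <= H t.
      by move=> t; rewrite leNgt; apply/negP => ht; apply: hn; exists t.
    pose s := ginv1 (n.+1%:R * m - 1).
    pose t := Num.min s 0.
    have t0 : t <= 0 by rewrite ge_min lexx orbT.
    have st : t <= s by rewrite ge_min lexx.
    have := c3 0 (erefl _) 0 0 (t%:M) (symS t) (loewner_scalar_le0 t0).
    rewrite /F_H opprK sumS /lambda_min eig_scalar //=.
    have := m1 _ _ st; rewrite /s K12 => h1' h2'.
    have := hb t; have : (0 : R) < n.+1%:R by [].
    move: (n.+1%:R : R) h1' h2' => k; nra.
- case=> hu hl.
  have [Hinv HK] := boolp.choice (fun y => H_surj H_incr H_cont hu hl y).
  have Hinvc := Hinv_cont H_incr H_cont HK.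
  have KH : forall t, Hinv (H t) = t by move=> t; apply: (H_inj H_incr); rewrite HK.
  split; first by move=> w r p; exact: FH_cont.
  move=> w S1 S2 sS1 sS2.
  pose K := @Kb R n.+1.
  have hcont : forall c : R, continuous (fun M => Hinv (- (n%:R * H (c * K M)))).
    move=> c.
    have hK : continuous (fun M : 'M[R]_n.+1 => c * K M).
      by move=> X; apply: (@cvgMl_tmp _ _ _ (nbhs_filter X)); exact: Kb_cont.
    have hHK : continuous (fun M : 'M[R]_n.+1 => H (c * K M)).
      by move=> X; exact: (continuous_comp (hK X) (H_cont _)).
    have hf : continuous (fun M : 'M[R]_n.+1 => - (n%:R * H (c * K M))).
      by move=> X; apply: (@cvgN _ _ _ _ (nbhs_filter X)); apply: (@cvgMl_tmp _ _ _ (nbhs_filter X)); exact: hHK.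
    by move=> X; exact: (continuous_comp (hf X) (Hinvc _)).
  exists (fun t M => H t + n%:R * H (1 * K M)), (fun t M => H t + n%:R * H (-1 * K M)).
  exists (fun M => Hinv (- (n%:R * H (1 * K M)))), (fun M => Hinv (- (n%:R * H (-1 * K M)))).
  split; [|split; [|split; [|split; [|split]]]].
  + move=> M0 _; split; first by move=> s t st; rewrite lerD2r; exact: H_mono.
    split; last by rewrite HK addNr.
    exists (fun y => Hinv (y - n%:R * H (1 * K M0))) => t /=.
      by rewrite addrK KH.
    by rewrite HK subrK.
  + move=> M0 _; split; first by move=> s t st; rewrite lerD2r; exact: H_mono.
    split; last by rewrite HK addNr.
    exists (fun y => Hinv (y - n%:R * H (-1 * K M0))) => t /=.
      by rewrite addrK KH.
    by rewrite HK subrK.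
  + by apply: continuous_subspaceT; exact: hcont.
  + by apply: continuous_subspaceT; exact: hcont.
  + move=> M SM r p X Xs hle.
    rewrite /F_H opprK /lambda_min big_ord_recl /= mul1r.
    apply: lerD => //.
    apply: le_trans (_ : \sum_(i < n) H (K M) <= _).
      apply: ler_sum => i _; apply: (H_mono H_incr); apply: (eig_upper Xs hle).
      by rewrite /eig; apply: mem_nth; rewrite (eigs_size Xs); exact: (ltn_ord (lift ord0 i)).
    by rewrite sumr_const card_ord mulr_natl.
  + move=> M SM r p Y Ys hle.
    rewrite /F_H opprK /lambda_max big_ord_recr /= mulN1r addrC.
    apply: lerD => //.
    apply: (@le_trans _ _ (\sum_(i < n) H (- K M))).
      by rewrite sumr_const card_ord mulr_natl.
    apply: ler_sum => i _; apply: (H_mono H_incr); apply: (eig_lower Ys hle).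
    by rewrite /eig; apply: mem_nth; rewrite (eigs_size Ys); exact: (ltn_ord (widen_ord (leqnSn n) i)).
Qed.
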